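(* Let $G$, $\Sigma_o$, a supervisor $S$ realized by $H$, secret initial states $X_{sec}\subseteq X_0$ and vulnerable events $\Sigma_v\subseteq\Sigma_o$ be given, let $M^s$ be the simplified All Attack Structure, and let $m$ be a single attack structure of $M^s$ with state set $Q^m$. Then the induced strategy $A_m$ is IS-detectable if and only if $Q^m\cap Q^+_{det}\neq\emptyset$.
   Context: A plant is a finite automaton $G=(X,\Sigma,\delta,X_0)$ with partial transition function $\delta$ (extended to strings), initial states $X_0\subseteq X$; $\mathcal{L}(G,x_0)=\{s:\delta(x_0,s)\text{ defined}\}$, $\mathcal{L}(G)=\bigcup_{x_0\in X_0}\mathcal{L}(G,x_0)$. $\Sigma=\Sigma_o\dot\cup\Sigma_{uo}=\Sigma_c\dot\cup\Sigma_{uc}$, $P:\Sigma^*\to\Sigma_o^*$ the natural projection. A supervisor is $S:P(\mathcal{L}(G))\to\Gamma=\{\gamma\subseteq\Sigma:\Sigma_{uc}\subseteq\gamma\}$, realized by a deterministic automaton $H=(Z,\Sigma,\xi,z_0)$ with $\xi(z,\sigma)\neq z\Rightarrow\sigma\in\Sigma_o$ and $\Delta_H(\xi(z_0,s))=S(P(s))$ for $s\in\mathcal{L}(S/G)$ ($\Delta_H(z)$ = events defined at $z$). For any map $T$ from observable strings to subsets of $\Sigma$, $\mathcal{L}(T/G,x_0)$ is defined by $\epsilon\in\mathcal{L}(T/G,x_0)$ and $s\sigma\in\mathcal{L}(T/G,x_0)$ iff $s\in\mathcal{L}(T/G,x_0)$, $s\sigma\in\mathcal{L}(G,x_0)$,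 $\sigma\in T(P(s))$; $\mathcal{L}(T/G)=\bigcup_{x_0}\mathcal{L}(T/G,x_0)$. Estimates: $\mathcal{E}^C_{T/G}(\alpha)=\{\delta(x_0,s):x_0\in X_0,s\in\mathcal{L}(T/G,x_0),P(s)=\alpha\}$, $\mathcal{E}^I_{T/G}(\alpha)=\{x_0\in X_0:\exists s\in\mathcal{L}(T/G,x_0),P(s)=\alpha\}$. An attacker is a map $A:P(\mathcal{L}(G))\to\Sigma_o\cup\{\epsilon\}$ with $A(\epsilon)=\epsilon$ and, for $\alpha\sigma\in P(\mathcal{L}(G))$, $A(\alpha\sigma)=\sigma$ if $\sigma\notin\Sigma_v$, $A(\alpha\sigma)\in\Sigma_v\cup\{\epsilon\}$ if $\sigma\in\Sigma_v$. It induces $g_A(\epsilon)=\epsilon$, $g_A(\alpha\sigma)=g_A(\alpha)A(\alpha\sigma)$ and $S_A=S\circ g_A$. $A$ is stealthy along $\alpha\in P(\mathcal{L}(S_A/G))$ if $\mathcal{E}^C_{S/G}(g_A(\alpha))\neq\emptyset$. $A$ is IS-detectable if there exist $\alpha\in\Sigma_o^*$, $\sigma\in\Sigma_o$ with $\alpha\sigma\in P(\mathcal{L}(S_A/G))$ such that $A$ is stealthy along $\alpha$ and $\mathcal{E}^I_{S_A/G}(\alpha\sigma)\subseteq X_{sec}$. Operators: for $q\subseteq X$, $\gamma\subseteq\Sigma$, $\sigma\in\Sigma_o$: $\textsf{UR}_\gamma(q)=\{\delta(x,s):x\in q,s\in(\Sigma_{uo}\cap\gamma)^*\}$, $\textsf{NX}_\sigma(q)=\{\delta(x,\sigma):x\in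 q\}$, $\textsf{NX}_\epsilon(q)=q$, $\mathcal{O}(q,\gamma)=\{\sigma\in\Sigma_o\cap\gamma:\exists x\in q,\exists w\in(\Sigma_{uo}\cap\gamma)^*,\delta(x,w\sigma)\text{ defined}\}$. Augmented system: states $\tilde X\subseteq X_0\times X$, $\tilde X_0=\{(x_0,x_0)\}$, $\tilde\delta((x_0,x),\sigma)=(x_0,\delta(x,\sigma))$; $\widetilde{\textsf{UR}},\widetilde{\textsf{NX}},\mathcal{O}(\tilde q,\gamma)$ defined analogously; $I(\tilde q)=\{x_0:(x_0,x)\in\tilde q\text{ for some }x\}$. All Attack Structure (AAS): for $\sigma\in\Sigma_o$, $\hat\sigma$ is a doctored copy, $\hat\epsilon$ an erasure symbol; $\mathcal{V}(\sigma)=\{\hat\sigma':\sigma'\in\Sigma_v\}\cup\{\hat\epsilon\}$ if $\sigma\in\Sigma_v$, else $\{\hat\sigma\}$. $M=(Q,\Sigma_M,f,q_0)$, $\Sigma_M=\Sigma_o\cup\{\hat\sigma:\sigma\in\Sigma_o\}\cup\{\hat\epsilon\}$, $q_0=(X_0,\tilde X_0,z_0)$, states reachable from $q_0$, $Q=Q_e\dot\cup Q_a$: environment states $(q,\tilde q,z)$ with $q\subseteq X,\tilde q\subseteq\tilde X,z\in Z\cup\{z_{\textsf{att}}\}$ ($z_{\textsf{att}}$ new, $\Delta_H(z_{\textsf{att}})=\emptyset$); attack states $(q,\tilde q,z,\sigma)$. At $(q,\tilde q,z)$ enabled events are $\mathcal{O}(\tilde q,\Delta_H(z))$ if $z\in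 Z$, none if $z=z_{\textsf{att}}$, with $f((q,\tilde q,z),\sigma)=(q,\tilde q,z,\sigma)$. At $(q,\tilde q,z,\sigma)$ enabled events are $\mathcal{V}(\sigma)$, with $f((q,\tilde q,z,\sigma),\hat\sigma_a)=(q',\tilde q',z')$, $q'=\textsf{NX}_{\sigma_a}(\textsf{UR}_{\Delta_H(z)}(q))$, $\tilde q'=\widetilde{\textsf{NX}}_\sigma(\widetilde{\textsf{UR}}_{\Delta_H(z)}(\tilde q))$, $z'=\xi(z,\sigma_a)$ if $q'\ne\emptyset$ (with $\xi(z,\epsilon)=z$), $z'=z_{\textsf{att}}$ otherwise. Extended strings $h\in\mathcal{L}_e$ are those leading from $q_0$ to an environment state; for $h=\sigma_1\hat\sigma_{a1}\cdots\sigma_n\hat\sigma_{an}$, $\textsf{obs}(h)=\sigma_1\cdots\sigma_n$. Environment state $(q,\tilde q,z)$ is positive detected if $I(\tilde q)\subseteq X_{sec}$ (set $Q^+_{det}$), negative detected if $I(\tilde q)\cap X_{sec}=\emptyset$ (set $Q^-_{det}$), $Q_{det}=Q^+_{det}\cup Q^-_{det}$; it is undetectable (set $Q_{ud}$) if $I(\tilde q)\cap X_{sec}\neq\emptyset$ and for every $(x_0,x)\in\widetilde{\textsf{UR}}_{\Delta_H(z)}(\tilde q)$ with $x_0\in X_{sec}$ there exists $(x_0',x)\in\widetilde{\textsf{UR}}_{\Delta_H(z)}(\tilde q)$ with $x_0'\notin X_{sec}$. The simplified AAS $M^s=(Q^s,\Sigma_M,f^s,q_0)$ is the part of $M$ reachable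 from $q_0$ after removing all outgoing transitions from states in $Q_{det}\cup Q_{ud}$. A single attack structure (SAS) of $M^s$ is a sub-automaton $m=(Q^m,\Sigma_M,f^m,q_0)$ of $M^s$ (states $Q^m=Q'_a\cup Q'_e$ reachable from $q_0$, transitions a subset of those of $M^s$) such that every attack state in $Q'_a$ has exactly one enabled event in $m$, and every environment state in $Q'_e$ has in $m$ all the enabled events it has in $M^s$. For an observation $\alpha$, $\textsf{obs}^{-1}_m(\alpha)$ denotes the (at most one) extended string $h$ of $m$ with $\textsf{obs}(h)=\alpha$. The induced strategy $A_m$ is: $A_m(\epsilon)=\epsilon$; for nonempty $\alpha\in P(\mathcal{L}(G))$, if $\textsf{obs}^{-1}_m(\alpha)$ exists and its last event is $\hat\sigma_a$ then $A_m(\alpha)=\sigma_a$ (with $\sigma_a=\epsilon$ for $\hat\epsilon$); otherwise $A_m(\alpha)$ is the last event of $\alpha$. *)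

(* Defs.v *)
From HB Require Import structures.
From mathcomp Require Import all_boot.
From mathcomp Require Import boolp.

Set Implicit Arguments.
Unset Strict Implicit.
Unset Printing Implicit Defensive.

(* Events of the All Attack Structure: Ev s = the observed event s (a
   "plain" event of Sigma_o), Hat (Some s') = the doctored copy hat s',
   Hat None = the erasure symbol hat epsilon. *)
Inductive evM (E : Type) : Type := Ev of E | Hat of option E.
Arguments Ev {E}.
Arguments Hat {E}.

Section IS.

Variables (X E : finType).
Variable delta : X -> E -> option X.
Variable X0 : {set X}.
Variable obs : pred E.
Variable ctrl : pred E.

Definition dstar (x : X) (s : seq E) : option X :=
  foldl (fun ox e => if ox is Some y then delta y e else None) (Some x) s.

Definition proj (s : seq E) : seq E := filter obs s.

Definition inPLG (a : seq E) : Prop :=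
  exists x0 s, x0 \in X0 /\ dstar x0 s <> None /\ proj s = a.

Inductive LTG (T : seq E -> {set E}) (x0 : X) : seq E -> Prop :=
| LTG_nil : LTG T x0 [::]
| LTG_rcons s e : LTG T x0 s -> dstar x0 (rcons s e) <> None ->
    e \in T (proj s) -> LTG T x0 (rcons s e).

Definition inPLTG (T : seq E -> {set E}) (a : seq E) : Prop :=
  exists x0 s, x0 \in X0 /\ LTG T x0 s /\ proj s = a.

Definition EstC (T : seq E -> {set E}) (a : seq E) : {set X} :=
  [set x | `[< exists x0 s, x0 \in X0 /\ LTG T x0 s /\ proj s = a
                            /\ dstar x0 s = Some x >] ].
Definition EstI (T : seq E -> {set E}) (a : seq E) : {set X} :=
  [set x0 | `[< x0 \in X0 /\ exists s, LTG T x0 s /\ proj s = a >] ].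

(* (None = eps).                                                        *)
(* g_A(eps) = eps, g_A(alpha sigma) = g_A(alpha) A(alpha sigma) *)
Definition gA (A : seq E -> option E) (a : seq E) : seq E :=
  pmap (fun i => A (take i.+1 a)) (iota 0 (size a)).

Definition SA (S : seq E -> {set E}) (A : seq E -> option E) :
  seq E -> {set E} := fun a => S (gA A a).

Definition stealthy (S : seq E -> {set E}) (A : seq E -> option E)
  (a : seq E) : Prop := EstC S (gA A a) != set0.

Definition IS_detectable (S : seq E -> {set E}) (Xsec : {set X})
  (A : seq E -> option E) : Prop :=
  exists (a : seq E) (e : E), obs e /\ inPLTG (SA S A) (rcons a e) /\
    stealthy S A a /\ EstI (SA S A) (rcons a e) \subset Xsec.

Variables (Z : finType) (xi : Z -> E -> option Z) (z0 : Z).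

Definition xistar (z : Z) (s : seq E) : option Z :=
  foldl (fun oz e => if oz is Some y then xi y e else None) (Some z) s.

Definition DeltaH (z : Z) : {set E} := [set e | xi z e != None].

Definition is_supervisor (S : seq E -> {set E}) : Prop :=
  forall a, inPLG a -> [set e | ~~ ctrl e] \subset S a.

Definition realizes (S : seq E -> {set E}) : Prop :=
  (forall z e z', xi z e = Some z' -> z' != z -> obs e) /\
  (forall x0 s, x0 \in X0 -> LTG S x0 s ->
     exists z, xistar z0 s = Some z /\ DeltaH z = S (proj s)).

Variables (Xsec : {set X}) (Ev_v : {set E}).

(* states (q, qt, z, flag): z = None is z_att; flag = None for an
   environment state, flag = Some sigma for the attack state
   (q, qt, z, sigma). *)
Definition stateM : Type := ({set X} * {set (X * X)} * option Z * option E)%type.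

Definition DeltaM (oz : option Z) : {set E} :=
  if oz is Some z then DeltaH z else set0.

Definition uo_in (g : {set E}) (w : seq E) : bool :=
  all (fun e => (e \in g) && ~~ obs e) w.

Definition UR (g : {set E}) (q : {set X}) : {set X} :=
  [set y | `[< exists x w, x \in q /\ uo_in g w /\ dstar x w = Some y >] ].

Definition URt (g : {set E}) (qt : {set (X * X)}) : {set (X * X)} :=
  [set p | `[< exists x w, (p.1, x) \in qt /\ uo_in g w /\ dstar x w = Some p.2 >] ].

Definition NX (oa : option E) (q : {set X}) : {set X} :=
  if oa is Some e then [set y | [exists x in q, delta x e == Some y]] else q.

Definition NXt (e : E) (qt : {set (X * X)}) : {set (X * X)} :=
  [set p | [exists x, ((p.1, x) \in qt) && (delta x e == Some p.2)]].

Definition Ot (qt : {set (X * X)}) (g : {set E}) : {set E} :=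
  [set e | obs e && (e \in g) &&
     `[< exists p w, p \in qt /\ uo_in g w /\ dstar p.2 (rcons w e) <> None >] ].

Definition Iset (qt : {set (X * X)}) : {set X} :=
  [set x0 | [exists x, (x0, x) \in qt]].

Definition Vset (e : E) : {set option E} :=
  if e \in Ev_v then [set oa | if oa is Some e' then e' \in Ev_v else true]
  else [set Some e].

Definition q0M : stateM :=
  (X0, [set (x, x) | x in X0], Some z0, None).

Definition fM (s : stateM) (ev : evM E) : option stateM :=
  let: (q, qt, oz, fl) := s in
  match fl, ev with
  | None, Ev e =>
      if e \in Ot qt (DeltaM oz) then Some (q, qt, oz, Some e) else None
  | Some e, Hat oa =>
      if oa \in Vset e then
        let q' := NX oa (UR (DeltaM oz) q) in
        let qt' := NXt e (URt (DeltaM oz) qt) in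
        let z' := if q' == set0 then None else
                  match oz with
                  | Some z => if oa is Some a then xi z a else Some z
                  | None => None
                  end in
        Some (q', qt', z', None)
      else None
  | _, _ => None
  end.

Definition is_env (s : stateM) : bool := s.2 == None.

Definition posdet (s : stateM) : bool :=
  is_env s && (Iset s.1.1.2 \subset Xsec).
Definition negdet (s : stateM) : bool :=
  is_env s && [disjoint Iset s.1.1.2 & Xsec].
Definition det (s : stateM) : bool := posdet s || negdet s.
Definition undet (s : stateM) : bool :=
  let: (q, qt, oz, fl) := s in
  let u := URt (DeltaM oz) qt in
  (fl == None) && (Iset qt :&: Xsec != set0) &&
  [forall p in u, (p.1 \in Xsec) ==>
     [exists x0', ((x0', p.2) \in u) && (x0' \notin Xsec)]].

Definition fMs (s : stateM) (ev : evM E) : option stateM :=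
  if det s || undet s then None else fM s ev.

Inductive reach (f : stateM -> evM E -> option stateM) : stateM -> Prop :=
| reach0 : reach f q0M
| reachS s ev s' : reach f s -> f s ev = Some s' -> reach f s'.

Definition fstar (f : stateM -> evM E -> option stateM) (s : stateM)
  (h : seq (evM E)) : option stateM :=
  foldl (fun os ev => if os is Some t then f t ev else None) (Some s) h.

Definition is_SAS (fm : stateM -> evM E -> option stateM) : Prop :=
  (forall s ev s', reach fm s -> fm s ev = Some s' -> fMs s ev = Some s') /\
  (forall s, reach fm s -> ~~ is_env s -> exists! ev, fm s ev <> None) /\
  (forall s ev, reach fm s -> is_env s -> fMs s ev <> None -> fm s ev <> None).

Definition inLe (fm : stateM -> evM E -> option stateM) (h : seq (evM E)) : Prop :=
  exists s, fstar fm q0M h = Some s /\ is_env s.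

Fixpoint obsM (h : seq (evM E)) : seq E :=
  match h with
  | [::] => [::]
  | Ev e :: h' => e :: obsM h'
  | Hat _ :: h' => obsM h'
  end.

Definition last_ev (h : seq (evM E)) : option (evM E) :=
  if h is x :: h' then Some (last x h') else None.

Definition Am (fm : stateM -> evM E -> option stateM) (a : seq E) : option E :=
  match a with
  | [::] => None
  | e :: a' =>
      match pselect (exists p : seq (evM E) * option E,
                       inLe fm p.1 /\ obsM p.1 = a /\ last_ev p.1 = Some (Hat p.2)) with
      | left H => (proj1_sig (cid H)).2
      | right _ => Some (last e a')
      end
  end.

End IS.

(* Main.v *)
Require Import Defs.
From HB Require Import structures.
From mathcomp Require Import all_boot.
From mathcomp Require Import boolp.

Set Implicit Arguments.
Unset Strict Implicit.
Unset Printing Implicit Defensive.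

Section Plant.
Variables (X E : finType) (delta : X -> E -> option X) (X0 : {set X}) (obs : pred E).
Local Notation dstar := (dstar delta).
Local Notation proj := (proj obs).
Local Notation LTG := (LTG delta obs).
Local Notation UR := (UR delta obs).
Local Notation URt := (URt delta obs).
Local Notation uo_in := (uo_in obs).

Lemma dstar_cat x s1 s2 :
  dstar x (s1 ++ s2) = obind (fun y => dstar y s2) (dstar x s1).
Proof.
rewrite /Defs.dstar foldl_cat; case: (foldl _ _ s1) => [y|] //=.
by elim: s2.
Qed.

Lemma dstar_rcons x s e : dstar x (rcons s e) = obind (delta^~ e) (dstar x s).
Proof. by rewrite -cats1 dstar_cat; case: (dstar x s). Qed.

Lemma dstar_cons x e s : dstar x (e :: s) = obind (fun y => dstar y s) (delta x e).
Proof. by rewrite -cat1s dstar_cat. Qed.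

Lemma proj_cat s1 s2 : proj (s1 ++ s2) = proj s1 ++ proj s2.
Proof. exact: filter_cat. Qed.

Lemma proj_rcons s e : proj (rcons s e) = if obs e then rcons (proj s) e else proj s.
Proof. exact: filter_rcons. Qed.

Definition unobs (w : seq E) := all (fun e => ~~ obs e) w.

Lemma proj_nil w : unobs w -> proj w = [::].
Proof. by elim: w => //= e w IH /andP[/negbTE -> /IH]. Qed.

Lemma proj_nilE w : proj w = [::] -> unobs w.
Proof. by elim: w => //= e w IH; case: ifP => //= -> /IH. Qed.

Lemma uo_unobs g w : uo_in g w -> unobs w.
Proof. by elim: w => //= e w IH /andP[/andP[_ ->] /IH]. Qed.

Lemma LTG_rconsE T x0 s e : LTG T x0 (rcons s e) ->
  [/\ LTG T x0 s, dstar x0 (rcons s e) <> None & e \in T (proj s)].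
Proof.
move E1: (rcons s e) => t H; case: t / H E1 => [|s' e' H1 H2 H3] E1.
  by case: s E1.
by case/rcons_inj: E1 => -> ->.
Qed.

Lemma LTG_dstar T x0 s : LTG T x0 s -> exists x, dstar x0 s = Some x.
Proof.
case=> [|s' e _ H _]; first by exists x0.
by case: (dstar x0 (rcons s' e)) H => [x _|//]; exists x.
Qed.

Lemma LTG_prefix T x0 s1 s2 : LTG T x0 (s1 ++ s2) -> LTG T x0 s1.
Proof.
elim/last_ind: s2 => [|s2 e IH]; first by rewrite cats0.
by rewrite -rcons_cat => /LTG_rconsE[/IH].
Qed.

Lemma LTG_ext T x0 s y w y' : LTG T x0 s -> dstar x0 s = Some y ->
  uo_in (T (proj s)) w -> dstar y w = Some y' -> LTG T x0 (s ++ w).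
Proof.
elim: w s y => [|e w IH] s y; first by rewrite cats0.
move=> Hs Hy /= /andP[/andP[He Ho] Hw]; rewrite dstar_cons.
case Hd: (delta y e) => [y1|] //= Hw'.
rewrite -cat_rcons; apply: (IH _ y1) => //.
- by constructor => //; rewrite dstar_rcons Hy /= Hd.
- by rewrite dstar_rcons Hy.
- by rewrite proj_rcons (negbTE Ho).
Qed.

Lemma LTG_uo T x0 s w : LTG T x0 (s ++ w) -> unobs w -> uo_in (T (proj s)) w.
Proof.
elim/last_ind: w => [|w e IH] //.
rewrite -rcons_cat => /LTG_rconsE[H1 _ H3].
rewrite /unobs all_rcons => /andP[Ho Hw].
rewrite /Defs.uo_in all_rcons; apply/andP; split; last exact: IH.
by rewrite Ho andbT; rewrite proj_cat (proj_nil Hw) cats0 in H3.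
Qed.

Lemma proj_split s u v : proj s = u ++ v ->
  exists s1 s2, [/\ s = s1 ++ s2, proj s1 = u & proj s2 = v].
Proof.
elim: s u => [|e s IH] u.
  by case: u v => [|a u] [|b v] //= _; exists [::], [::].
case: u => [|a u] /=.
  by move=> H; exists [::], (e :: s).
case: ifP => Ho.
  case=> <- H; have [s1 [s2 [-> H1 H2]]] := IH _ H.
  by exists (e :: s1), s2; rewrite /= Ho H1.
move=> H; have [s1 [s2 [-> H1 H2]]] := IH (a :: u) H.
by exists (e :: s1), s2; rewrite /= Ho H1.
Qed.

Lemma proj_single s e : proj s = [:: e] ->
  exists w1 w, [/\ s = w1 ++ e :: w, proj w1 = [::] & unobs w].
Proof.
elim: s => [|a s IH] //=.
case: ifP => Ho.
  case=> -> /proj_nilE Hs.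
  by exists [::], s.
move=> /IH [w1 [w [-> H1 H2]]].
by exists (a :: w1), w; rewrite /= Ho H1.
Qed.

Lemma proj_rsplit s u e : proj s = rcons u e ->
  exists s1 w, [/\ s = s1 ++ e :: w, proj s1 = u & unobs w].
Proof.
rewrite -cats1 => /proj_split [s1 [s2 [-> H1 /proj_single [w1 [w [-> H2 H3]]]]]].
by exists (s1 ++ w1), w; rewrite catA proj_cat H1 H2 cats0.
Qed.

Lemma splice T x0 x0' s1 s2 s1' : LTG T x0 (s1 ++ s2) -> LTG T x0' s1' ->
  proj s1' = proj s1 -> dstar x0' s1' = dstar x0 s1 -> LTG T x0' (s1' ++ s2).
Proof.
move=> H H' Hp Hd; elim/last_ind: s2 H => [|s2 e IH]; first by rewrite !cats0.
rewrite -!rcons_cat => /LTG_rconsE[H1 H2 H3]; constructor.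
- exact: IH.
- by rewrite dstar_rcons dstar_cat Hd -dstar_cat -dstar_rcons.
- by rewrite proj_cat Hp -proj_cat.
Qed.


Local Notation EstC := (EstC delta X0 obs).
Local Notation EstI := (EstI delta X0 obs).
Local Notation NXt := (NXt delta).
Local Notation NX := (NX delta).

Definition EstCt (T : seq E -> {set E}) (b : seq E) : {set X * X} :=
  [set p | `[< p.1 \in X0 /\ exists s, LTG T p.1 s /\ proj s = b
                            /\ dstar p.1 s = Some p.2 >] ].

Lemma inUR g q y : y \in UR g q <-> exists x w, [/\ x \in q, uo_in g w & dstar x w = Some y].
Proof.
rewrite inE; split => [/asboolP [x [w [H1 [H2 H3]]]]|[x [w [H1 H2 H3]]]].
  by exists x, w.
by apply/asboolP; exists x, w.
Qed.

Lemma inURt g qt p : p \in URt g qt <->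
  exists x w, [/\ (p.1, x) \in qt, uo_in g w & dstar x w = Some p.2].
Proof.
rewrite inE; split => [/asboolP [x [w [H1 [H2 H3]]]]|[x [w [H1 H2 H3]]]].
  by exists x, w.
by apply/asboolP; exists x, w.
Qed.

Lemma inEstC T b x : x \in EstC T b <->
  exists x0 s, [/\ x0 \in X0, LTG T x0 s, proj s = b & dstar x0 s = Some x].
Proof.
rewrite inE; split => [/asboolP [x0 [s [H1 [H2 [H3 H4]]]]]|[x0 [s [H1 H2 H3 H4]]]].
  by exists x0, s.
by apply/asboolP; exists x0, s.
Qed.

Lemma inEstCt T b p : p \in EstCt T b <->
  p.1 \in X0 /\ exists s, [/\ LTG T p.1 s, proj s = b & dstar p.1 s = Some p.2].
Proof.
rewrite inE; split => [/asboolP [H1 [s [H2 [H3 H4]]]]|[H1 [s [H2 H3 H4]]]].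
  by split=> //; exists s.
by apply/asboolP; split=> //; exists s.
Qed.

Lemma inEstI T b x0 : x0 \in EstI T b <-> exists x, (x0, x) \in EstCt T b.
Proof.
rewrite inE; split => [/asboolP [H1 [s [H2 H3]]]|[x /inEstCt [H1 [s [H2 H3 H4]]]]].
  have [x Hx] := LTG_dstar H2.
  by exists x; apply/inEstCt; split=> //; exists s.
by apply/asboolP; split=> //; exists s.
Qed.

Lemma inPLTGE T b : inPLTG delta X0 obs T b <-> exists p, p \in EstCt T b.
Proof.
split => [[x0 [s [H1 [H2 H3]]]]|[[x0 x] /inEstCt [H1 [s [H2 H3 H4]]]]].
  have [x Hx] := LTG_dstar H2.
  by exists (x0, x); apply/inEstCt; split=> //; exists s.
by exists x0, s.
Qed.

Lemma UR_sub g (q : {set X}) : q \subset UR g q.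
Proof. by apply/subsetP => x Hx; apply/inUR; exists x, [::]. Qed.

Lemma URt_sub g (qt : {set X * X}) : qt \subset URt g qt.
Proof. by apply/subsetP => [[x0 x]] Hx; apply/inURt; exists x, [::]. Qed.

Lemma UR_idem g (q : {set X}) : UR g (UR g q) = UR g q.
Proof.
apply/eqP; rewrite eqEsubset UR_sub andbT; apply/subsetP => y /inUR [x [w [/inUR [x' [w' [H1 H2 H3]]] H4 H5]]].
apply/inUR; exists x', (w' ++ w); split=> //.
  by rewrite /Defs.uo_in all_cat; apply/andP.
by rewrite dstar_cat H3.
Qed.

Lemma UR0 g : UR g set0 = set0.
Proof. by apply/setP => y; rewrite [RHS]inE; apply/negbTE/negP => /inUR [x [w []]]; rewrite inE. Qed.

Lemma EstC_nil T : EstC T [::] = UR (T [::]) X0.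
Proof.
apply/setP => x; apply/idP/idP.
  move=> /inEstC [x0 [s [H1 H2 H3 H4]]]; apply/inUR; exists x0, s; split=> //.
  by have := @LTG_uo T x0 [::] s H2 (proj_nilE H3).
move=> /inUR [x0 [w [H1 H2 H3]]]; apply/inEstC; exists x0, w; split=> //.
- by apply: (@LTG_ext T x0 [::] x0 w x) => //; constructor.
- exact/proj_nil/(uo_unobs H2).
Qed.

Lemma EstCt_nil T : EstCt T [::] = URt (T [::]) [set (x, x) | x in X0].
Proof.
apply/setP => [[x0 x]]; apply/idP/idP.
  move=> /inEstCt [/= H1 [s [H2 H3 H4]]]; apply/inURt; exists x0, s; split=> //.
    by apply/imsetP; exists x0.
  by have := @LTG_uo T x0 [::] s H2 (proj_nilE H3).
move=> /inURt [y [w [/imsetP [x1 Hx1 [-> ->]] H2 H3]]]; apply/inEstCt; split=> //.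
exists w; split=> //.
- by apply: (@LTG_ext T x1 [::] x1 w x) => //; constructor.
- exact/proj_nil/(uo_unobs H2).
Qed.

Lemma EstC_rconsP T b e x : obs e ->
  x \in EstC T (rcons b e) <-> e \in T b /\ x \in UR (T (rcons b e)) (NX (Some e) (EstC T b)).
Proof.
move=> Ho; split.
  move=> /inEstC [x0 [s [H1 H2 H3 H4]]].
  have [s1 [w [Es Hp Hw]]] := proj_rsplit H3; subst s.
  move: (H2); rewrite -cat_rcons => H2'.
  have := LTG_prefix H2' => /LTG_rconsE [Hs1 Hd He].
  rewrite Hp in He; split=> //.
  have [y Hy] := LTG_dstar Hs1.
  move: Hd; rewrite dstar_rcons Hy /=; case Hy1: (delta y e) => [y1|] // _.
  apply/inUR; exists y1, w; split.
  - rewrite inE; apply/existsP; exists y; rewrite Hy1 eqxx andbT.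
    by apply/inEstC; exists x0, s1.
  - by have := LTG_uo H2' Hw; rewrite proj_rcons Ho Hp.
  - by move: H4; rewrite -cat_rcons dstar_cat dstar_rcons Hy /= Hy1.
move=> [He /inUR [y1 [w [Hy1 Hw Hx]]]].
move: Hy1; rewrite inE => /existsP [y /andP [/inEstC [x0 [s1 [H1 H2 H3 H4]]] /eqP Hd]].
apply/inEstC; exists x0, (rcons s1 e ++ w); split=> //.
- apply: (@LTG_ext T x0 (rcons s1 e) y1 w x) => //.
  + by constructor => //; [rewrite dstar_rcons H4 /= Hd | rewrite H3].
  + by rewrite dstar_rcons H4.
  + by rewrite proj_rcons Ho H3.
- by rewrite proj_cat proj_rcons Ho H3 (proj_nil (uo_unobs Hw)) cats0.
- by rewrite dstar_cat dstar_rcons H4 /= Hd.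
Qed.

Lemma EstCt_rconsP T b e p : obs e ->
  p \in EstCt T (rcons b e) <-> e \in T b /\ p \in URt (T (rcons b e)) (NXt e (EstCt T b)).
Proof.
case: p => x0 x Ho; split.
  move=> /inEstCt [/= H1 [s [H2 H3 H4]]].
  have [s1 [w [Es Hp Hw]]] := proj_rsplit H3; subst s.
  move: (H2); rewrite -cat_rcons => H2'.
  have := LTG_prefix H2' => /LTG_rconsE [Hs1 Hd He].
  rewrite Hp in He; split=> //.
  have [y Hy] := LTG_dstar Hs1.
  move: Hd; rewrite dstar_rcons Hy /=; case Hy1: (delta y e) => [y1|] // _.
  apply/inURt; exists y1, w; split.
  - rewrite inE; apply/existsP; exists y; rewrite Hy1 eqxx andbT.
    by apply/inEstCt; split=> //; exists s1.
  - by have := LTG_uo H2' Hw; rewrite proj_rcons Ho Hp.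
  - by move: H4; rewrite /= -cat_rcons dstar_cat dstar_rcons Hy /= Hy1.
move=> [He /inURt [y1 [w [Hy1 Hw Hx]]]].
move: Hy1; rewrite inE => /existsP [y /andP [/inEstCt [H1 [s1 [H2 H3 H4]]] /eqP Hd]].
apply/inEstCt; split=> //; exists (rcons s1 e ++ w); split=> //.
- apply: (@LTG_ext T x0 (rcons s1 e) y1 w x) => //.
  + by constructor => //; [rewrite dstar_rcons H4 /= Hd | rewrite H3].
  + by rewrite dstar_rcons H4.
  + by rewrite proj_rcons Ho H3.
- by rewrite proj_cat proj_rcons Ho H3 (proj_nil (uo_unobs Hw)) cats0.
- by rewrite dstar_cat dstar_rcons H4 /= Hd.
Qed.

Lemma EstCt_prefix T u v p : p \in EstCt T (u ++ v) -> exists p', p'.1 = p.1 /\ p' \in EstCt T u.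
Proof.
move=> /inEstCt [H1 [s [H2 H3 H4]]].
have [s1 [s2 [Es Hp _]]] := proj_split H3; subst s.
have H2' := LTG_prefix H2; have [y Hy] := LTG_dstar H2'.
by exists (p.1, y); split=> //; apply/inEstCt; split=> //; exists s1.
Qed.

Lemma EstC_prefix T u v : EstC T (u ++ v) != set0 -> EstC T u != set0.
Proof.
case/set0Pn => x /inEstC [x0 [s [H1 H2 H3 H4]]].
have [s1 [s2 [Es Hp _]]] := proj_split H3; subst s.
have H2' := LTG_prefix H2; have [y Hy] := LTG_dstar H2'.
by apply/set0Pn; exists y; apply/inEstC; exists x0, s1.
Qed.

End Plant.

Section Main.
Variables (X E : finType) (delta : X -> E -> option X) (X0 : {set X})
  (obs ctrl : pred E) (S : seq E -> {set E})
  (Z : finType) (xi : Z -> E -> option Z) (z0 : Z)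
  (Xsec : {set X}) (Ev_v : {set E})
  (fm : stateM X E Z -> evM E -> option (stateM X E Z)).
Hypothesis HH : realizes delta X0 obs xi z0 S.
Hypothesis Hv : {in Ev_v, forall e, obs e}.
Hypothesis Hnontriv : ~~ (X0 \subset Xsec).
Hypothesis Hm : is_SAS delta X0 obs xi z0 Xsec Ev_v fm.

Local Notation dstar := (dstar delta).
Local Notation proj := (proj obs).
Local Notation LTG := (LTG delta obs).
Local Notation UR := (UR delta obs).
Local Notation URt := (URt delta obs).
Local Notation EstC := (EstC delta X0 obs).
Local Notation EstI := (EstI delta X0 obs).
Local Notation EstCt := (EstCt delta X0 obs).
Local Notation NXt := (NXt delta).
Local Notation NX := (NX delta).
Local Notation xistar := (xistar xi).
Local Notation DeltaH := (DeltaH xi).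
Local Notation fM := (fM delta obs xi Ev_v).
Local Notation fMs := (fMs delta obs xi Xsec Ev_v).
Local Notation reach := (reach X0 z0 fm).
Local Notation q0 := (q0M E X0 z0).
Local Notation A := (Am X0 z0 fm).
Local Notation Tm := (SA S A).
Local Notation fstar := (fstar fm).
Local Notation Ot := (Ot delta obs).

Lemma xistar_rcons z s e : xistar z (rcons s e) = obind (xi^~ e) (xistar z s).
Proof. by rewrite /Defs.xistar -cats1 foldl_cat /=; case: foldl. Qed.

Lemma xistar_proj x0 s : x0 \in X0 -> LTG S x0 s -> xistar z0 s = xistar z0 (proj s).
Proof.
move=> Hx0; elim => [|s' e H IH Hd He] //.
have [z [Hz HD]] := (proj2 HH) x0 s' Hx0 H.
move: He; rewrite -HD inE; case Hxi: (xi z e) => [z'|] // _.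
rewrite xistar_rcons Hz /= Hxi proj_rcons.
case: ifP => Ho; first by rewrite xistar_rcons -IH Hz /= Hxi.
rewrite -IH Hz; case: (eqVneq z' z) => [->//|/((proj1 HH) _ _ _ Hxi)].
by rewrite Ho.
Qed.

Lemma fM_kind s ev s' : fM s ev = Some s' ->
  (is_env s /\ ~~ is_env s' /\ exists σ, ev = Ev σ) \/
  (~~ is_env s /\ is_env s' /\ exists oa, ev = Hat oa).
Proof.
case: s => [[[q qt] oz] [σ|]]; case: ev => [e|oa] //=.
- by case: ifP => // _ [<-]; right; split => //; split => //; exists oa.
- by case: ifP => // _ [<-]; left; split => //; split => //; exists e.
Qed.

Lemma fm_fM s ev s' : reach s -> fm s ev = Some s' -> fM s ev = Some s'.
Proof. move=> Hr He; have := (proj1 Hm) _ _ _ Hr He; rewrite /fMs; by case: ifP. Qed.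

Inductive Penv : seq (evM E) -> stateM X E Z -> Prop :=
| Penv0 : Penv [::] q0
| PenvS h st σ sa oa st' : Penv h st -> fm st (Ev σ) = Some sa ->
    fm sa (Hat oa) = Some st' -> Penv (rcons (rcons h (Ev σ)) (Hat oa)) st'.

Lemma Penv_reach h st : Penv h st -> reach st.
Proof.
elim => [|h1 st1 σ sa oa st1' _ IH H1 H2]; first exact: reach0.
exact: (reachS (reachS IH H1) H2).
Qed.

Lemma Penv_step h st σ sa : Penv h st -> fm st (Ev σ) = Some sa ->
  reach sa /\ ~~ is_env sa.
Proof.
move=> HP F; have Hr := Penv_reach HP; split; first exact: reachS Hr F.
by case: (fM_kind (fm_fM Hr F)) => [[_ []]|[_ [_ [oa //]]]].
Qed.

Lemma Penv_env h st : Penv h st -> is_env st.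
Proof.
case => [//|h1 st1 σ sa oa st1' H H1 H2].
have [Hr _] := Penv_step H H1.
by case: (fM_kind (fm_fM Hr H2)) => [[_ [_ [σ' //]]]|[_ []]].
Qed.

Lemma fstar_rcons s h ev : fstar s (rcons h ev) = obind (fun t => fm t ev) (fstar s h).
Proof. by rewrite /Defs.fstar -cats1 foldl_cat /=; case: foldl. Qed.

Lemma fstar_cons s ev h : fstar s (ev :: h) = obind (fun t => fstar t h) (fm s ev).
Proof. by rewrite /Defs.fstar /=; case: (fm s ev) => //=; elim: h. Qed.

Lemma Penv_fstar h st : Penv h st -> fstar q0 h = Some st.
Proof.
elim => // h1 st1 σ sa oa st1' _ IH H1 H2.
by rewrite !fstar_rcons IH /= H1 /= H2.
Qed.

Lemma reach_fstar s h t : reach s -> fstar s h = Some t -> reach t.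
Proof.
elim: h s => [|ev h IH] s Hr; first by case=> <-.
rewrite fstar_cons; case Ef: (fm s ev) => [s1|] //=.
by apply: IH; exact: reachS Hr Ef.
Qed.

Lemma reach_fstar0 s : reach s -> exists h, fstar q0 h = Some s.
Proof.
elim => [|s1 ev s1' _ [h Hh] He]; first by exists [::].
by exists (rcons h ev); rewrite fstar_rcons Hh.
Qed.

Lemma fstar_Penv h s : fstar q0 h = Some s ->
  (is_env s -> Penv h s) /\
  (~~ is_env s -> exists h0 σ st, [/\ h = rcons h0 (Ev σ), Penv h0 st & fm st (Ev σ) = Some s]).
Proof.
elim/last_ind: h s => [|h ev IH] s.
  by case=> <-; split => // _; exact: Penv0.
rewrite fstar_rcons; case Ht: (fstar q0 h) => [t|] //= Hs.
have Hr : reach t := reach_fstar (reach0 _ _ _) Ht.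
have [IH1 IH2] := IH _ Ht.
case: (fM_kind (fm_fM Hr Hs)) => [[Et [Es [σ Eev]]]|[Et [Es [oa Eev]]]]; subst ev.
  split => [Hc|_]; first by rewrite Hc in Es.
  by exists h, σ, t; split => //; exact: IH1 Et.
split => [_|Hc]; last by rewrite Es in Hc.
have [h0 [σ [st [-> Hp Hf]]]] := IH2 Et.
exact: PenvS Hp Hf Hs.
Qed.

Lemma obsM_cat (h1 h2 : seq (evM E)) : obsM (h1 ++ h2) = obsM h1 ++ obsM h2.
Proof. by elim: h1 => //= [[e|oa] h IH]; rewrite IH. Qed.

Lemma obsM_PS (h : seq (evM E)) σ oa : obsM (rcons (rcons h (Ev σ)) (Hat oa)) = rcons (obsM h) σ.
Proof. by rewrite -!cats1 !obsM_cat /= cats0. Qed.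

Lemma Penv_uniq h1 s1 h2 s2 : Penv h1 s1 -> Penv h2 s2 -> obsM h1 = obsM h2 ->
  h1 = h2 /\ s1 = s2.
Proof.
move=> H1; elim: H1 h2 s2 => [|h st σ sa oa st' H IH F1 F2] h2 s2 H2.
  case: H2 => [//|h' st0 σ' sa' oa' st'' H' _ _].
  by rewrite obsM_PS; case: (obsM h').
case: H2 => [|h' st0 σ' sa' oa' st'' H' F1' F2']; first by rewrite obsM_PS; case: (obsM h).
rewrite !obsM_PS => /rcons_inj [Eo Eσ]; subst σ'.
have [Eh Est] := IH _ _ H' Eo; subst h' st0.
rewrite F1 in F1'; case: F1' => Esa; subst sa'.
have [Hr Hne] := Penv_step H F1.
have [ev [_ Hu]] := (proj1 (proj2 Hm)) sa Hr Hne.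
have E1 : ev = Hat oa by apply: Hu; rewrite F2.
have E2 : ev = Hat oa' by apply: Hu; rewrite F2'.
have Eoa : Hat oa = Hat oa' by rewrite -E1 -E2.
case: Eoa => Eoa; subst oa'.
by rewrite F2 in F2'; case: F2' => ->.
Qed.

Lemma last_ev_rcons (l : seq (evM E)) x : last_ev (rcons l x) = Some x.
Proof. by case: l => //= a l; rewrite last_rcons. Qed.

Lemma Am_Penv h σ oa st' : Penv (rcons (rcons h (Ev σ)) (Hat oa)) st' ->
  A (rcons (obsM h) σ) = oa.
Proof.
move=> HP.
have [e [a' Ea]] : exists e a', rcons (obsM h) σ = e :: a'.
  by case: (obsM h) => [|e a']; [exists σ, [::] | exists e, (rcons a' σ)].
rewrite Ea /Am; case: pselect => [Hp|Hn]; last first.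
  exfalso; apply: Hn; exists (rcons (rcons h (Ev σ)) (Hat oa), oa); split => /=.
    exists st'; split; [exact: Penv_fstar | exact: Penv_env HP].
  by rewrite obsM_PS Ea last_ev_rcons.
case: (cid Hp) => [[h2 o2] /= [[s2 [Hf Henv]] [Eo El]]].
have HP2 := proj1 (fstar_Penv Hf) Henv.
have [Eh _] := Penv_uniq HP2 HP ltac:(by rewrite Eo obsM_PS Ea).
by move: El; rewrite Eh last_ev_rcons => [[]].
Qed.

Lemma gA_rcons (B : seq E -> option E) b e :
  gA B (rcons b e) = gA B b ++ (if B (rcons b e) is Some a then [:: a] else [::]).
Proof.
rewrite /gA size_rcons -addn1 iotaD add0n pmap_cat /=.
congr (_ ++ _).
  apply: eq_in_pmap => i; rewrite mem_iota add0n /= => Hi.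
  by rewrite -cats1 takel_cat.
by rewrite take_oversize ?size_rcons //; case: (B (rcons b e)).
Qed.

Lemma gA_prefix (B : seq E -> option E) u v : exists w, gA B (u ++ v) = gA B u ++ w.
Proof.
elim/last_ind: v => [|v e [w IH]]; first by exists [::]; rewrite !cats0.
by rewrite -rcons_cat gA_rcons IH -catA; eexists.
Qed.


Definition Inv (h : seq (evM E)) (st : stateM X E Z) : Prop :=
  let: (q, qt, oz, _) := st in
  URt (Tm (obsM h)) qt = EstCt Tm (obsM h) /\
  match oz with
  | Some zz => [/\ xistar z0 (gA A (obsM h)) = Some zz, DeltaH zz = S (gA A (obsM h)),
                  UR (S (gA A (obsM h))) q = EstC S (gA A (obsM h)) & q != set0]
  | None => EstC S (gA A (obsM h)) = set0
  end.

Lemma X0_nonempty : exists2 x, x \in X0 & x \notin Xsec.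
Proof. by apply/subsetPn. Qed.

Lemma inOt qt g e : e \in Ot qt g <->
  [/\ obs e, e \in g & exists p w, [/\ p \in qt, uo_in obs g w & dstar p.2 (rcons w e) <> None]].
Proof.
rewrite inE -andbA; split => [/and3P [H1 H2 /asboolP [p [w [H3 [H4 H5]]]]]|[H1 H2 [p [w [H3 H4 H5]]]]].
  by split => //; exists p, w.
by apply/and3P; split => //; apply/asboolP; exists p, w.
Qed.

Lemma Inv_holds h st : Penv h st -> Inv h st.
Proof.
elim => [|h1 st1 σ sa oa st1' HP IH F1 F2].
  have g0 : gA A [::] = [::] by [].
  rewrite /Inv /= g0; split; first by rewrite EstCt_nil.
  have [x0 Hx0 _] := X0_nonempty.
  have [z [Hz HD]] := (proj2 HH) x0 [::] Hx0 ltac:(constructor).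
  case: Hz => Ez; subst z.
  split => //; first by rewrite EstC_nil.
  by apply/set0Pn; exists x0.
have HA := Am_Penv (PenvS HP F1 F2).
have [Hr Hne] := Penv_step HP F1.
have Fe1 := fm_fM (Penv_reach HP) F1.
have Fe2 := fm_fM Hr F2.
have Henv := Penv_env HP.
clear HP F1 F2 Hr Hne.
move: IH Fe1 Fe2 Henv HA; rewrite /Inv obsM_PS.
set b := obsM h1.
case: st1 => [[[q qt] oz] [fl|]] /= IH Fe1 Fe2 //= _ HA.
move: Fe1; case: ifP => // HO [Esa]; subst sa.
move: Fe2 => /=; case: ifP => // HV [<-].
case: oz HO IH => [zz|]; last by move=> /inOt [_]; rewrite inE.
move=> /inOt [Ho Hin _] [IHa [Hx HD HU Hq]] /=.
have ETb : Tm b = DeltaH zz by rewrite HD.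
split.
  apply/setP => p; rewrite -ETb IHa; apply/idP/idP => [Hp|].
    by apply/(EstCt_rconsP delta X0 Tm b p Ho); split => //; rewrite ETb.
  by move=> /(EstCt_rconsP delta X0 Tm b p Ho) [_].
rewrite gA_rcons HA HD.
case: oa HV HA => [a|] HV HA /=.
- have Hoa : obs a.
    move: HV; rewrite /Vset; case: ifP => Hσv; rewrite inE.
      by move=> Ha; apply: Hv.
    by move/eqP => [->].
  rewrite cats1 HU.
  case Hxa: (xi zz a) => [z1|]; last first.
    have Hna : a \notin S (gA A b) by rewrite -HD inE Hxa.
    suff -> : EstC S (rcons (gA A b) a) = set0 by case: ifP.
    apply/setP => x; rewrite [RHS]inE; apply/negbTE/negP => /(EstC_rconsP delta X0 S (gA A b) x Hoa) [Ha _].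
    by rewrite Ha in Hna.
  have Ha : a \in S (gA A b) by rewrite -HD inE Hxa.
  have EE : EstC S (rcons (gA A b) a) = UR (S (rcons (gA A b) a)) (NX (Some a) (EstC S (gA A b))).
    apply/setP => x; apply/idP/idP.
      by move=> /(EstC_rconsP delta X0 S (gA A b) x Hoa) [_].
    by move=> Hx'; apply/(EstC_rconsP delta X0 S (gA A b) x Hoa); split.
  case: ifP => Hq'.
    have E0 : NX (Some a) (EstC S (gA A b)) = set0 := eqP Hq'.
    by rewrite EE E0 UR0.
  split.
  - by rewrite xistar_rcons Hx /= Hxa.
  - have [x Hx'] : exists x, x \in EstC S (rcons (gA A b) a).
      case/set0Pn: (negbT Hq') => x Hx'; exists x; rewrite EE.
      exact: (subsetP (UR_sub _ _ _ _) _ Hx').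
    move/inEstC: Hx' => [x0 [s [Hx0 Hs Hps _]]].
    have [z [Hz HDz]] := (proj2 HH) x0 s Hx0 Hs.
    rewrite (xistar_proj Hx0 Hs) Hps xistar_rcons Hx /= Hxa in Hz.
    by case: Hz => ->; rewrite HDz Hps.
  - by rewrite EE.
  - by [].
- rewrite cats0.
  have Hne' : EstC S (gA A b) != set0.
    rewrite -HU; case/set0Pn: Hq => x Hx'; apply/set0Pn; exists x.
    exact: (subsetP (UR_sub _ _ _ _) _ Hx').
  rewrite HU (negbTE Hne'); split => //.
  by rewrite -HU UR_idem.
Qed.


Lemma Iset_in (qt : {set X * X}) x0 x : (x0, x) \in qt -> x0 \in Iset qt.
Proof. by move=> H; rewrite inE; apply/existsP; exists x. Qed.

Lemma dir2 : (exists s, reach s /\ posdet Xsec s) -> IS_detectable delta X0 obs S Xsec A.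
Proof.
move=> [s [Hr Hp]].
have [h Hh] := reach_fstar0 Hr.
have Henv : is_env s by case/andP: Hp.
have HP := proj1 (fstar_Penv Hh) Henv.
clear Hh Hr Henv.
case: HP Hp => [|h0 st σ sa oa st' HP F1 F2] Hp.
  exfalso; move/negP: Hnontriv; apply; apply/subsetP => x Hx.
  case/andP: Hp => _ /subsetP; apply; rewrite inE; apply/existsP; exists x.
  by apply/imsetP; exists x.
have Inv1 := Inv_holds (PenvS HP F1 F2).
have Inv0 := Inv_holds HP.
have [Hr Hne] := Penv_step HP F1.
have Fe1 := fm_fM (Penv_reach HP) F1.
have Fe2 := fm_fM Hr F2.
have Henv := Penv_env HP.
clear F1 F2 Hr Hne HP.
move: Inv1 Inv0 Fe1 Fe2 Henv Hp; rewrite /Inv obsM_PS.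
set b := obsM h0.
case: st => [[[q qt] oz] [fl|]] //= Inv1 Inv0 Fe1 Fe2 _ Hp.
move: Fe1; case: ifP => // HO [Esa]; subst sa.
move: Fe2 => /=; case: ifP => // HV [Est']; subst st'.
case: oz HO Inv0 Inv1 Hp => [zz|]; last by move=> /inOt [_]; rewrite inE.
move=> /inOt [Ho Hin [[x0 x] [w [Hp0 Hw Hd]]]] [IHa [Hx HD HU Hq]] /= [Inv1a _] Hp.
exists b, σ; split => //; split; [|split].
- apply/inPLTGE.
  move: Hd; rewrite dstar_rcons; case Hy: (dstar x w) => [y|] //=.
  case Hy1: (delta y σ) => [y1|] // _.
  exists (x0, y1); rewrite -Inv1a; apply: (subsetP (URt_sub _ _ _ _)).
  rewrite inE; apply/existsP; exists y; rewrite Hy1 eqxx andbT.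
  by apply/inURt; exists x, w.
- rewrite /stealthy -HU; case/set0Pn: Hq => y Hy; apply/set0Pn; exists y.
  exact: (subsetP (UR_sub _ _ _ _) _ Hy).
- apply/subsetP => y /inEstI [x1 Hx1].
  rewrite -Inv1a in Hx1; move/inURt: Hx1 => [x2 [w2 [Hq2 _ _]]].
  case/andP: Hp => _ /subsetP; apply; exact: Iset_in Hq2.
Qed.

Lemma dir1 : IS_detectable delta X0 obs S Xsec A -> exists s, reach s /\ posdet Xsec s.
Proof.
move=> [a [e [Ho [HPL [Hst Hsub]]]]].
have [[x0 xf] Hpf] := proj1 (inPLTGE _ _ _ _ _) HPL.
have Hx0sec : x0 \in Xsec by apply: (subsetP Hsub); apply/inEstI; exists xf.
suff: forall b, (exists v, rcons a e = b ++ v) ->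
   (exists s, reach s /\ posdet Xsec s) \/ exists h st, Penv h st /\ obsM h = b.
  move=> /(_ (rcons a e)) [|//|[h [st [HP Eo]]]]; first by exists [::]; rewrite cats0.
  exists st; split; first exact: Penv_reach HP.
  have Henv := Penv_env HP.
  have := Inv_holds HP; rewrite /Inv Eo.
  case: st HP Henv => [[[q qt] oz] fl] _ Henv [Ia _].
  apply/andP; split => //=; apply/subsetP => y; rewrite inE => /existsP [x Hx].
  apply: (subsetP Hsub); apply/inEstI; exists x; rewrite -Ia.
  exact: (subsetP (URt_sub _ _ _ _)).
elim/last_ind => [|b σ IH] [v Hpre].
  by right; exists [::], q0; split => //; exact: Penv0.
have Hpre' : exists v, rcons a e = b ++ v by exists (σ :: v); rewrite Hpre cat_rcons.
case: (IH Hpre') => [Hl|[h [st [HP Eo]]]]; first by left.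
have Inv0 := Inv_holds HP.
have Henv := Penv_env HP.
have Hrst := Penv_reach HP.
have [v' Ha] : exists v', a = b ++ v'.
  move: Hpre; rewrite cat_rcons.
  case/lastP: v => [|v l].
    by rewrite cats1 => /rcons_inj [-> _]; exists [::]; rewrite cats0.
  by rewrite -rcons_cons -rcons_cat => /rcons_inj [-> _]; exists (σ :: v).
have Hstb : EstC S (gA A b) != set0.
  have [w Hw] := gA_prefix A b v'.
  have := Hst; rewrite /stealthy Ha Hw; exact: EstC_prefix.
move: Inv0 Henv Hrst HP; rewrite /Inv Eo.
case: st => [[[q qt] oz] [fl|]] //= [Ia Ib] _ Hrst HP.
case: oz Ib HP Hrst => [zz [Hx HD HU Hq]|Hb]; last by rewrite Hb eqxx in Hstb.
move=> HP Hrst.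
move: (Hpf); rewrite Hpre cat_rcons => /inEstCt [/= Hx0X0 [s [Hs Hps Hds]]].
have [s1 [s2 [Es Hps1 Hps2]]] := proj_split Hps.
subst s.
have Hs1 := LTG_prefix Hs.
have [y Hy] := LTG_dstar Hs1.
have Hpb : (x0, y) \in EstCt Tm b by apply/inEstCt; split => //; exists s1.
have Hpb' := Hpb; rewrite -Ia in Hpb'.
have ETb : Tm b = DeltaH zz by rewrite HD.
case Hpd: (posdet Xsec (q, qt, Some zz, @None E)).
  by left; exists (q, qt, Some zz, @None E).
case Hnd: (negdet Xsec (q, qt, Some zz, @None E)).
  exfalso; move: Hnd => /andP [_ Hdis].
  move/inURt: Hpb' => [x1 [w1 [Hq1 _ _]]].
  by have := disjointFr Hdis (Iset_in Hq1); rewrite Hx0sec.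
case Hud: (undet delta obs xi Xsec (q, qt, Some zz, @None E)).
  exfalso; move: Hud => /= /andP [_ /forallP /(_ (x0, y))].
  rewrite -ETb Hpb' /= Hx0sec /= => /existsP [x0' /andP [Hp' Hns]].
  rewrite Ia in Hp'; move/inEstCt: Hp' => [/= Hx0' [s1' [Hs1' Hps1' Hds1']]].
  have Hsp := splice Hs Hs1' ltac:(by rewrite Hps1' Hps1) ltac:(by rewrite Hds1' Hy).
  have : x0' \in Xsec.
    apply: (subsetP Hsub); apply/inEstI; exists xf; apply/inEstCt; split => //.
    exists (s1' ++ s2); split => //.
    - by rewrite proj_cat Hps1' Hps2 Hpre cat_rcons.
    - by rewrite dstar_cat Hds1' -Hy -dstar_cat.
  by rewrite (negbTE Hns).
have Hobsσ : obs σ.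
  have : σ \in proj (s1 ++ s2) by rewrite proj_cat Hps2 mem_cat inE eqxx orbT.
  by rewrite mem_filter => /andP [].
have HOt : σ \in Ot qt (DeltaH zz).
  have [p' [Ep' Hp']] := @EstCt_prefix _ _ delta X0 obs Tm (rcons b σ) v (x0, xf)
    ltac:(by rewrite -Hpre).
  move/(EstCt_rconsP delta X0 Tm b p' Hobsσ): Hp' => [Hσin /inURt [y1 [w1 [Hy1 Hw1 Hd1]]]].
  move: Hy1; rewrite inE => /existsP [y2 /andP [Hy2 /eqP Hd2]].
  rewrite -Ia in Hy2; move/inURt: Hy2 => [x3 [w3 [Hq3 Hw3 Hd3]]].
  apply/inOt; split => //; first by rewrite -ETb.
  exists (p'.1, x3), w3; split => //; first by rewrite -ETb.
  by rewrite dstar_rcons Hd3 /= Hd2.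
have HfMs : fMs (q, qt, Some zz, @None E) (Ev σ) = Some (q, qt, Some zz, Some σ).
  by rewrite /fMs /det Hpd Hnd Hud /= HOt.
have Hfm : fm (q, qt, Some zz, @None E) (Ev σ) <> None.
  by apply: (proj2 (proj2 Hm)) => //; rewrite HfMs.
case Hfm1: (fm _ (Ev σ)) Hfm => [sa|] // _.
have [Hra Hnea] := Penv_step HP Hfm1.
have [ev [Hev _]] := (proj1 (proj2 Hm)) sa Hra Hnea.
case Hfm2: (fm sa ev) Hev => [st'|] // _.
case: (fM_kind (fm_fM Hra Hfm2)) => [[Hc _]|[_ [_ [oa Eev]]]]; first by rewrite Hc in Hnea.
subst ev.
right; exists (rcons (rcons h (Ev σ)) (Hat oa)), st'; split; first exact: PenvS HP Hfm1 Hfm2.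
by rewrite obsM_PS Eo.
Qed.

End Main.

Theorem theorem1
  (X E : finType) (delta : X -> E -> option X) (X0 : {set X})
  (obs ctrl : pred E)
  (S : seq E -> {set E})
  (Z : finType) (xi : Z -> E -> option Z) (z0 : Z)
  (Xsec : {set X}) (Ev_v : {set E})
  (fm : stateM X E Z -> evM E -> option (stateM X E Z))
  (HS : is_supervisor delta X0 obs ctrl S)
  (HH : realizes delta X0 obs xi z0 S)
  (Hsec : Xsec \subset X0)
  (Hv : {in Ev_v, forall e, obs e})
  (Hnontriv : ~~ (X0 \subset Xsec))
  (Hm : is_SAS delta X0 obs xi z0 Xsec Ev_v fm) :
  IS_detectable delta X0 obs S Xsec (Am X0 z0 fm) <->
  (exists s, reach X0 z0 fm s /\ posdet Xsec s).
Proof.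
split; [apply: dir1 | apply: dir2]. all: eassumption.
Qed.
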